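(* For every constant $c\in\mathbb C$, the polynomial $z^m+\bar z^m$ is quasiharmonic, i.e. $F(z^m+\bar z^m)=0$. The polynomials $z\bar z$ and $z^m+\bar z^m$ are algebraically independent.
   Context: Let $m\ge2$, $\zeta=e^{2\pi i/m}$, and let $z,\bar z$ be independent variables. For $j=0,\dots,m-1$ let $s_j$ be the algebra automorphism of $\mathbb C[z,\bar z]$ with $s_j(z)=-\zeta^j\bar z$, $s_j(\bar z)=-\zeta^{-j}z$. For constant $c$ define Dunkl operators $Y(q)=\frac{\partial q}{\partial z}-c\sum_j\frac{q-s_j(q)}{z+\zeta^j\bar z}$, $\bar Y(q)=\frac{\partial q}{\partial\bar z}-c\sum_j\frac{q-s_j(q)}{\bar z+\zeta^{-j}z}$, and $F=-Y\bar Y$. *)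

(* Defs.v *)
From HB Require Import structures.
From mathcomp Require Import all_boot all_order all_algebra.
From mathcomp Require Import mpoly.
From Stdlib Require Import ClassicalEpsilon.
Set Implicit Arguments. Unset Strict Implicit. Unset Printing Implicit Defensive.
Import Order.TTheory GRing.Theory Num.Theory.
Local Open Scope ring_scope.

Section Dunkl.
(* C plays the role of the complex numbers: any numeric algebraically closed
   field (e.g. complex R for a real closed field R, in particular C itself). *)
Variable C : numClosedFieldType.

(* The polynomial ring C[z, zbar]: z = 'X_0, zbar = 'X_1. *)
Definition poly2 := {mpoly C[2]}.
Definition zv : poly2 := 'X_(@ord0 1).
Definition zbv : poly2 := 'X_(@ord_max 1).

(* zeta = e^{2 pi i / m}: m.-root (-1) is the m-th root of -1 of minimal
   non-negative argument, i.e. e^{i pi / m}; its square is e^{2 pi i / m}. *)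
Definition zeta (m : nat) : C := (m.-root (-1)) ^+ 2.

Definition sj (m j : nat) (q : poly2) : poly2 :=
  q \mPo [tuple - (zeta m ^+ j) *: zbv; - (zeta m ^- j) *: zv].

Definition exdiv (p l : poly2) : poly2 :=
  epsilon (inhabits (0 : poly2)) (fun r => p = l * r).

Definition DunklY (m : nat) (c : C) (q : poly2) : poly2 :=
  q^`M(@ord0 1)
  - c *: \sum_(j < m) exdiv (q - sj m j q) (zv + zeta m ^+ j *: zbv).

Definition DunklYbar (m : nat) (c : C) (q : poly2) : poly2 :=
  q^`M(@ord_max 1)
  - c *: \sum_(j < m) exdiv (q - sj m j q) (zbv + zeta m ^- j *: zv).

Definition DunklF (m : nat) (c : C) (q : poly2) : poly2 :=
  - DunklY m c (DunklYbar m c q).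

Definition quasiharmonic (m : nat) (c : C) (q : poly2) : Prop :=
  DunklF m c q = 0.

Definition alg_indep (p1 p2 : poly2) : Prop :=
  forall P : {mpoly C[2]}, P \mPo [tuple p1; p2] = 0 -> P = 0.

End Dunkl.

(* Main.v *)
Require Import Defs.
From HB Require Import structures.
From mathcomp Require Import all_boot all_order all_algebra.
From mathcomp Require Import mpoly.
From mathcomp Require Import separable closed_field cyclic cyclotomic.
From mathcomp Require Import ring zify.
From Stdlib Require Import ClassicalEpsilon.
Set Implicit Arguments. Unset Strict Implicit. Unset Printing Implicit Defensive.
Import Order.TTheory GRing.Theory Num.Theory.
Local Open Scope ring_scope.

Section S.
Variable C : numClosedFieldType.
Lemma prim_exists n : (0 < n)%N -> exists z : C, n.-primitive_root z.
Proof.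
pose p : {poly C} := 'X^n - 1; have [r Dp] := closed_field_poly_normal p.
move=> n_gt0; rewrite (monicP _) ?monicXnsubC // scale1r in Dp.
have rn1: all n.-unity_root r by apply/allP=> z; rewrite -root_prod_XsubC -Dp.
have sz_r: (n < (size r).+1)%N.
  by rewrite -(size_prod_XsubC r id) -Dp size_XnsubC.
have [|z] := hasP (has_prim_root n_gt0 rn1 _ sz_r); last by exists z.
by rewrite -separable_prod_XsubC -Dp separable_Xn_sub_1 // pnatr_eq0 -lt0n.
Qed.

Lemma unit_conj (w : C) : `|w| = 1 -> w^* = w^-1.
Proof.
move=> h; have e : w * w^* = 1 by rewrite -normCK h expr1n.
have w0 : w != 0 by apply/eqP => w0; move: e; rewrite w0 mul0r => /eqP; rewrite eq_sym oner_eq0.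
by rewrite -[w^*]mul1r -(mulVf w0) -mulrA e mulr1.
Qed.

Lemma geom0 (x : C) n : x ^+ n = 1 -> x != 1 -> \sum_(i < n) x ^+ i = 0.
Proof.
move=> h x1; have := subrX1 x n; rewrite h subrr => /esym/eqP.
by rewrite mulf_eq0 subr_eq0 (negbTE x1) => /eqP.
Qed.

Lemma prim_norm (g : C) t : (0 < t)%N -> t.-primitive_root g -> `|g| = 1.
Proof.
move=> t0 pg; have := prim_expr_order pg => /(congr1 (fun x => `|x|)).
by rewrite normrX normr1 => /eqP; rewrite pexpr_eq1 // => /eqP.
Qed.

Lemma fejer_id (w0 g : C) t : (0 < t)%N -> `|w0| = 1 -> t.-primitive_root g ->
  \sum_(k < t) `|\sum_(j < t) (w0 * g ^+ k) ^+ j| ^+ 2 = (t * t)%:R.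
Proof.
move=> t0 nw pg; have ng := prim_norm t0 pg.
under eq_bigr => k _ do rewrite normCK rmorph_sum mulr_suml.
under eq_bigr => k _ do under eq_bigr => j _ do rewrite mulr_sumr.
rewrite exchange_big /=.
under eq_bigr => j _ do rewrite exchange_big /=.
have E : forall k j l : nat, (w0 * g ^+ k) ^+ j * ((w0 * g ^+ k) ^+ l)^* =
   (w0 ^+ j * w0^* ^+ l) * (g ^+ j * g^* ^+ l) ^+ k.
  move=> k j l; rewrite rmorphXn rmorphM rmorphXn !exprMn -!exprM.
  rewrite [(k * j)%N]mulnC [(k * l)%N]mulnC !exprM; ring.
under eq_bigr => j _ do under eq_bigr => l _ do under eq_bigr => k _ do rewrite E.
under eq_bigr => j _ do under eq_bigr => l _ do rewrite -mulr_sumr.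
have g0 : g != 0 by apply/eqP => g00; move: ng; rewrite g00 normr0 => /eqP; rewrite eq_sym oner_eq0.
have S1 : forall j l : 'I_t, \sum_(k < t) (g ^+ j * g^* ^+ l) ^+ k = if j == l then t%:R else 0.
  move=> j l; rewrite (unit_conj ng) exprVn.
  case: eqP => [->|/eqP jl].
    rewrite mulfV ?expf_neq0 //.
    by under eq_bigr do rewrite expr1n; rewrite sumr_const card_ord.
  apply: geom0.
    by rewrite exprMn exprVn -!exprM mulnC exprM (prim_expr_order pg) mulnC exprM (prim_expr_order pg) !expr1n invr1 mulr1.
  apply/eqP => /(congr1 (fun x => x * g ^+ l)); rewrite mulrVK ?unitfE ?expf_neq0 // mul1r.
  move/eqP; rewrite (eq_prim_root_expr pg) !modn_small //; exact/negP.
under eq_bigr => j _ do under eq_bigr => l _ do rewrite S1.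
have S2 : forall j : 'I_t, \sum_(l < t) w0 ^+ j * w0^* ^+ l * (if j == l then t%:R else 0) = w0 ^+ j * w0^* ^+ j * t%:R.
  move=> j; rewrite (bigD1 j) //= eqxx big1 ?addr0 //.
  by move=> l /negbTE; rewrite eq_sym => ->; rewrite mulr0.
under eq_bigr => j _ do rewrite S2.
have w00 : w0 != 0 by apply/eqP => w00; move: nw; rewrite w00 normr0 => /eqP; rewrite eq_sym oner_eq0.
under eq_bigr => j _ do rewrite (unit_conj nw) exprVn mulfV ?expf_neq0 // mul1r.
by rewrite sumr_const card_ord natrM mulr_natr.
Qed.

Lemma root_norm (u : C) t : (0 < t)%N -> `|u| = 1 -> `|t.-root u| = 1.
Proof.
move=> t0 nu; have := rootCK t0 u => /(congr1 (fun x => `|x|)).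
by rewrite normrX nu => /eqP; rewrite pexpr_eq1 // => /eqP.
Qed.

Lemma fejer (u : C) t : (0 < t)%N -> `|u| = 1 ->
  exists w, w ^+ t = u /\ t%:R * `|1 - w| ^+ 2 <= `|1 - u| ^+ 2.
Proof.
move=> t0 nu; have [g pg] := prim_exists t0.
set w0 := t.-root u.
have w0t : w0 ^+ t = u := rootCK t0 u.
have nw0 : `|w0| = 1 := root_norm t0 nu.
pose w (k : nat) := w0 * g ^+ k.
have wt k : w k ^+ t = u by rewrite /w exprMn w0t exprAC (prim_expr_order pg) expr1n mulr1.
case: (boolP [exists k : 'I_t, t%:R * `|1 - w k| ^+ 2 <= `|1 - u| ^+ 2]).
  by case/existsP => k hk; exists (w k); split.
move=> /existsPn H; exfalso.
have key (k : 'I_t) : `|\sum_(j < t) w k ^+ j| ^+ 2 < t%:R.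
  have hk := H k.
  have lt : `|1 - u| ^+ 2 < t%:R * `|1 - w k| ^+ 2.
    by rewrite real_ltNge ?hk // ?rpredM ?rpredX ?realn ?normr_real.
  have e : `|\sum_(j < t) w k ^+ j| ^+ 2 * `|1 - w k| ^+ 2 = `|1 - u| ^+ 2.
    by rewrite -(wt k) [in RHS](distrC 1) subrX1 normrM [`|w k - 1|](distrC (w k)) exprMn mulrC.
  have p : 0 < `|1 - w k| ^+ 2.
    have := le_lt_trans (exprn_ge0 2 (normr_ge0 (1 - u))) lt.
    by rewrite pmulr_rgt0 // ltr0n.
  by rewrite -(ltr_pM2r p) e.
have hs : has predT (index_enum 'I_t).
  by apply/hasP; exists (Ordinal t0) => //; rewrite /index_enum -enumT mem_enum.
have := ltr_sum hs (fun k _ => key k).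
by rewrite fejer_id // sumr_const card_ord natrM mulr_natr ltxx.
Qed.

Lemma sq_dist (x : C) : `|x| = 1 -> `|1 - x| ^+ 2 = 2 - 2 * 'Re x.
Proof.
move=> nx; have e : x * x^* = 1 by rewrite -normCK nx expr1n.
rewrite normCK ReE [2 * _]mulrC divfK ?pnatr_eq0 //.
have -> : (1 - x) * (1 - x)^* = 1 + x * x^* - (x + x^*).
  by rewrite rmorphB rmorph1; ring.
by rewrite e.
Qed.

Lemma zeta_prim0 m k : (1 < m)%N -> (0 < k < m)%N -> (m.-root (-1 : C)) ^+ (2 * k) != 1.
Proof.
move=> m1 /andP[k0 km]; set r := m.-root (-1 : C).
have m0 : (0 < m)%N by apply: ltnW.
have rm : r ^+ m = -1 := rootCK m0 (-1).
have nr : `|r| = 1 by apply: root_norm => //; rewrite normrN normr1.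
have N1 : (-1 : C) != 1 by rewrite lt_eqF // (lt_trans (ltrN10 _) ltr01).
apply/negP => /eqP rk.
have exP : exists g, (0 < g)%N && (r ^+ (2 * g) == 1) by exists k; rewrite k0 rk eqxx.
case: (ex_minnP exP) => g /andP[g0 /eqP rg] gmin.
have gk : (g <= k)%N by apply: gmin; rewrite k0 rk eqxx.
have r2m : r ^+ (2 * m) = 1 by rewrite mulnC exprM rm sqrrN expr1n.
have gm : (g %| m)%N.
  rewrite /dvdn; apply/negPn/negP => nz.
  have : (g <= m %% g)%N.
    apply: gmin; rewrite lt0n nz /=.
    move: r2m; rewrite {1}(divn_eq m g) mulnDr exprD.
    have -> : (2 * (m %/ g * g) = (2 * g) * (m %/ g))%N by rewrite mulnCA mulnC.
    by rewrite exprM rg expr1n mul1r => ->.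
  by rewrite leqNgt ltn_pmod.
have mgq : m = (m %/ g * g)%N by rewrite divnK.
set t := (m %/ g)%N in mgq.
have rg2 : (r ^+ g) ^+ 2 = 1 by rewrite -exprM mulnC.
have rgN : r ^+ g = -1.
  move/eqP: rg2; rewrite sqrf_eq1 => /orP[/eqP r1|/eqP //].
  by move: rm; rewrite mgq mulnC exprM r1 expr1n => /eqP; rewrite eq_sym (negbTE N1).
have t2 : (1 < t)%N.
  rewrite ltnNge; apply/negP => t1.
  have : (t * g <= 1 * g)%N by rewrite leq_mul2r t1 orbT.
  rewrite -mgq mul1n => mg.
  by move: (leq_ltn_trans (leq_trans mg gk) km); rewrite ltnn.
have [w [wt hw]] := fejer (ltnW t2) nr.
have wm : w ^+ m = -1 by rewrite mgq exprM wt.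
have r1 : r != 1 by apply/eqP => r1; move: rm; rewrite r1 expr1n => /eqP; rewrite eq_sym (negbTE N1).
have nw : `|w| = 1.
  have := congr1 (fun x => `|x|) wm; rewrite normrX normrN normr1 => /eqP.
  by rewrite pexpr_eq1 // => /eqP.
have Y : 0 < `|1 - r| ^+ 2 by rewrite exprn_gt0 // normr_gt0 subr_eq0 eq_sym.
have lt : `|1 - w| ^+ 2 < `|1 - r| ^+ 2.
  have [->|X0] := eqVneq (`|1 - w| ^+ 2) 0; first by [].
  have Xp : 0 < `|1 - w| ^+ 2 by rewrite lt0r X0 exprn_ge0.
  apply: lt_le_trans hw; rewrite ltr_pMl // ltr1n //.
rewrite !sq_dist // in lt.
have Rlt : 'Re r < 'Re w.
  by move: lt; rewrite ltrD2l ltrN2 ltr_pM2l // ltr0n.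
case: (boolP (0 <= 'Im w)) => hI.
  by have := rootC_Re_max m0 wm hI; rewrite -/r => /(lt_le_trans Rlt); rewrite ltxx.
have hI' : 0 <= 'Im w^*.
  have : 'Im w < 0 by rewrite real_ltNge ?Creal_Im ?rpred0.
  by rewrite Im_conj oppr_ge0 => /ltW.
have wm' : w^* ^+ m = -1 by rewrite -rmorphXn wm rmorphN1.
by have := rootC_Re_max m0 wm' hI'; rewrite -/r Re_conj => /(lt_le_trans Rlt); rewrite ltxx.
Qed.


Lemma zeta_m m : (0 < m)%N -> zeta C m ^+ m = 1.
Proof. by move=> m0; rewrite /zeta exprAC rootCK // sqrrN expr1n. Qed.

Lemma zeta_ne0 m : (0 < m)%N -> zeta C m != 0.
Proof.
move=> m0; apply/eqP => h; move: (zeta_m m0); rewrite h expr0n gtn_eqF //=.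
by move/eqP; rewrite eq_sym oner_eq0.
Qed.

Lemma zeta_G m : (1 < m)%N -> forall k, (k < m)%N ->
  \sum_(j < m) ((zeta C m ^+ j)^-1) ^+ k = if k == 0%N then m%:R else 0.
Proof.
move=> m1 k km; have m0 : (0 < m)%N by apply: ltnW.
case: eqP => [->|/eqP k0].
  by under eq_bigr do rewrite expr0; rewrite sumr_const card_ord.
have e : forall j : nat, ((zeta C m ^+ j)^-1) ^+ k = ((zeta C m ^+ k)^-1) ^+ j.
  by move=> j; rewrite -!exprVn exprAC.
under eq_bigr do rewrite e.
apply: geom0.
  by rewrite exprVn exprAC zeta_m // expr1n invr1.
rewrite invr_eq1 /zeta -exprM; apply: zeta_prim0 => //.
by rewrite lt0n k0.
Qed.
End S.

Section P.
Variable C : numClosedFieldType.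
Local Notation P := {mpoly C[2]}.

Lemma exdivP (p l r : poly2 C) : l != 0 -> p = l * r -> exdiv p l = r.
Proof.
move=> l0 pr; rewrite /exdiv.
have h := epsilon_spec (inhabits (0 : poly2 C)) (fun r => p = l * r) (ex_intro _ r pr).
by apply: (mulfI l0); rewrite -h -pr.
Qed.

Lemma dX (i j : 'I_2) : ('X_i : P)^`M(j) = (i == j)%:R.
Proof.
rewrite mderivX mnm1E; case: eqP => [->|_]; last by rewrite scale0r.
have -> : (U_(j) - U_(j) = 0)%MM by apply/mnmP => k; rewrite !mnmE subnn.
by rewrite mpolyX0 scale1r.
Qed.

Lemma dXn0 (p : P) j n : p^`M(j) = 0 -> (p ^+ n)^`M(j) = 0.
Proof.
move=> h; elim: n => [|n IH]; first by rewrite expr0 -mpolyC1 mderivC.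
by rewrite exprS mderivM h IH mul0r mulr0 addr0.
Qed.

Lemma dXnS (p : P) j n : (p ^+ n.+1)^`M(j) = n.+1%:R *: (p ^+ n * p^`M(j)).
Proof.
have E : forall (a b : P) (k : nat), b * a ^+ k.+1 + a * (k.+1%:R * (a ^+ k * b)) = k.+2%:R * (a ^+ k.+1 * b).
  by move=> a b k; rewrite exprS; set y := a ^+ k; ring.
elim: n => [|n IH]; first by rewrite expr1 expr0 mul1r scale1r.
by rewrite exprS mderivM IH -!mul_mpolyC !rmorph_nat E.
Qed.
End P.

Section Q.
Variable C : numClosedFieldType.
Variable m : nat.
Hypothesis m1 : (1 < m)%N.
Hypothesis zm : zeta C m ^+ m = 1.
Hypothesis zG : forall k, (k < m)%N ->
  \sum_(j < m) ((zeta C m ^+ j)^-1) ^+ k = if k == 0%N then m%:R else 0.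
Hypothesis z0 : zeta C m != 0.
Local Notation z := (zv C).
Local Notation w := (zbv C).
Local Notation ze := (zeta C m).

Lemma sjD j (p q : poly2 C) : sj m j (p + q) = sj m j p + sj m j q.
Proof. by rewrite /sj rmorphD. Qed.
Lemma sjB j (p q : poly2 C) : sj m j (p - q) = sj m j p - sj m j q.
Proof. by rewrite /sj rmorphB. Qed.
Lemma sjZ j a (p : poly2 C) : sj m j (a *: p) = a *: sj m j p.
Proof. by rewrite /sj comp_mpolyZ. Qed.
Lemma sjX j n : sj m j (z ^+ n) = (- ze ^+ j) ^+ n *: w ^+ n.
Proof. by rewrite /sj rmorphXn /= /zv comp_mpolyXU /= exprZn. Qed.
Lemma sjXb j n : sj m j (w ^+ n) = (- ze ^- j) ^+ n *: z ^+ n.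
Proof. by rewrite /sj rmorphXn /= /zbv comp_mpolyXU /= exprZn. Qed.

Lemma divz_ne0 a : z + a *: w != 0.
Proof.
apply/eqP => h; have := congr1 (mderiv ord0) h.
by rewrite mderivD mderivZ /zv /zbv !dX /= mderiv0 scaler0 addr0 => /eqP; rewrite oner_eq0.
Qed.
Lemma divw_ne0 a : w + a *: z != 0.
Proof.
apply/eqP => h; have := congr1 (mderiv ord_max) h.
by rewrite mderivD mderivZ /zv /zbv !dX /= mderiv0 scaler0 addr0 => /eqP; rewrite oner_eq0.
Qed.

Lemma m0 : (0 < m)%N. Proof. exact: ltnW. Qed.

Lemma zjm (j : nat) : (ze ^+ j) ^+ m = 1.
Proof. by rewrite exprAC zm expr1n. Qed.

Lemma Ybar_q c : DunklYbar m c (z ^+ m + w ^+ m) =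
   (m%:R * (1 - c * (1 - (-1) ^+ m))) *: w ^+ m.-1.
Proof.
rewrite /DunklYbar.
set s := (-1 : C) ^+ m. set k := 1 - s.
have ss : s * s = 1 by rewrite -exprMn mulrNN mulr1 expr1n.
have ks : k * s = - k by rewrite /k mulrBl ss mul1r opprB.
have hj : forall j : 'I_m, exdiv (z ^+ m + w ^+ m - sj m j (z ^+ m + w ^+ m)) (w + ze ^- j *: z)
   = k *: \sum_(i < m) w ^+ (m.-1 - i) * ((- ze ^- j) ^+ i *: z ^+ i).
  move=> j; apply: exdivP; first exact: divw_ne0.
  have e1 : (- ze ^+ j) ^+ m = s by rewrite exprNn zjm mulr1.
  have e2 : (- ze ^- j) ^+ m = s by rewrite exprNn exprVn zjm invr1 mulr1.
  rewrite sjD sjX sjXb e1 e2 -scalerAr.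
  have -> : w + ze ^- j *: z = w - (- ze ^- j) *: z by rewrite scaleNr opprK.
  under eq_bigr do rewrite -exprZn.
  rewrite -subrXX exprZn e2.
  rewrite scalerBr scalerA ks scaleNr opprK /k !scalerBl !scale1r.
  set Z := z ^+ m; set W := w ^+ m; set SW := s *: W; set SZ := s *: Z.
  ring.
under eq_bigr => j _ do rewrite hj.
rewrite -scaler_sumr exchange_big /=.
under eq_bigr => i _ do under eq_bigr => j _ do rewrite -scalerAr.
under eq_bigr => i _ do rewrite -scaler_suml.
have hs : forall i : 'I_m, \sum_(j < m) (- ze ^- j) ^+ i = (-1) ^+ i * (if i == 0%N :> nat then m%:R else 0).
  by move=> i; under eq_bigr do rewrite exprNn; rewrite -mulr_sumr zG.
under eq_bigr => i _ do rewrite hs.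
rewrite (bigD1 (Ordinal m0)) //= big1 ?addr0; last first.
  by move=> i /negbTE; rewrite -val_eqE /= => ->; rewrite mulr0 scale0r.
rewrite expr0 mul1r subn0 expr0 mulr1.
have dw : (w ^+ m)^`M(ord_max) = m%:R *: w ^+ m.-1.
  by rewrite -{1}(prednK m0) dXnS /zbv dX eqxx mulr1 prednK // m0.
have dz : (z ^+ m)^`M(ord_max) = 0 by apply: dXn0; rewrite /zv dX.
rewrite mderivD dw dz add0r !scalerA -scalerBl; congr (_ *: _); ring.
Qed.

Lemma Y_w c a : DunklY m c (a *: w ^+ m.-1) = 0.
Proof.
rewrite /DunklY.
have hj : forall j : 'I_m, exdiv (a *: w ^+ m.-1 - sj m j (a *: w ^+ m.-1)) (z + ze ^+ j *: w)
   = (a * ze ^- j) *: \sum_(i < m.-1) w ^+ (m.-1.-1 - i) * ((- ze ^- j) ^+ i *: z ^+ i).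
  move=> j; apply: exdivP; first exact: divz_ne0.
  rewrite sjZ sjXb -scalerBr -scalerA -!scalerAr scalerAl.
  have -> : ze ^- j *: (z + ze ^+ j *: w) = w - (- ze ^- j) *: z.
    by rewrite scalerDr scalerA (mulVf (expf_neq0 _ z0)) scale1r scaleNr opprK addrC.
  under eq_bigr do rewrite -exprZn.
  by rewrite -subrXX exprZn.
under eq_bigr => j _ do rewrite hj.
have dw : (a *: w ^+ m.-1)^`M(ord0) = 0 by rewrite mderivZ dXn0 ?scaler0 // /zbv dX.
rewrite dw.
under eq_bigr => j _ do rewrite scaler_sumr.
rewrite exchange_big /=.
under eq_bigr => i _ do under eq_bigr => j _ do rewrite -scalerAr scalerA.
under eq_bigr => i _ do rewrite -scaler_suml.
have hs : forall i : 'I_m.-1, \sum_(j < m) (a * ze ^- j) * (- ze ^- j) ^+ i = 0.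
  move=> i.
  have e : forall x : C, (a * x) * (- x) ^+ i = (a * (-1) ^+ i) * x ^+ i.+1.
    by move=> x; rewrite (exprNn x) exprS; set y := x ^+ i; set u := (-1) ^+ i; ring.
  under eq_bigr do rewrite e.
  have im : (i.+1 < m)%N by rewrite -ltn_predRL ltn_ord.
  by rewrite -mulr_sumr zG //= mulr0.
under eq_bigr => i _ do rewrite hs scale0r.
by rewrite big1 // scaler0 subr0.
Qed.
End Q.

Lemma indep (C : numClosedFieldType) m : (0 < m)%N ->
  alg_indep (zv C * zbv C) (zv C ^+ m + zbv C ^+ m).
Proof.
move=> hm P HP.
set A := zv C * zbv C in HP *; set B := zv C ^+ m + zbv C ^+ m in HP *.
set u0 := (U_(@ord0 1))%MM; set u1 := (U_(@ord_max 1))%MM.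
have eA : A = 'X_[u0 + u1] by rewrite /A /zv /zbv mpolyXD.
have eZ : zv C ^+ m = 'X_[u0 *+ m] by rewrite /zv mpolyXn.
have eW : zbv C ^+ m = 'X_[u1 *+ m] by rewrite /zbv mpolyXn.
have A0 : A != 0.
  rewrite eA; apply/eqP => h; have := congr1 (mcoeff (u0 + u1)) h.
  by rewrite mcoeffX eqxx mcoeff0 => /eqP; rewrite oner_eq0.
have c0 : forall k, (u0 *+ k)%MM ord0 = k by move=> k; rewrite mulmnE mnm1E eqxx mul1n.
have c1 : forall k, (u1 *+ k)%MM ord0 = 0%N by move=> k; rewrite mulmnE mnm1E /= mul0n.
have d0 : forall k, (u0 *+ k)%MM ord_max = 0%N by move=> k; rewrite mulmnE mnm1E /= mul0n.
have d1 : forall k, (u1 *+ k)%MM ord_max = k by move=> k; rewrite mulmnE mnm1E eqxx mul1n.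
have neq : (u0 *+ m != u1 *+ m)%MM.
  apply/eqP => /(congr1 (fun e : 'X_{1..2} => e ord0)); rewrite c0 c1 => h.
  by move: hm; rewrite h.
have eL : mlead B = (u0 *+ m)%MM \/ mlead B = (u1 *+ m)%MM.
  rewrite /B eZ eW mleadD !mleadXm //.
  by case/orP: (le_total (u0 *+ m)%MM (u1 *+ m)%MM) => h; [right; exact: join_r h| left; exact: join_l h].
have B0 : B != 0.
  apply/eqP => h; move: eL; rewrite h mlead0 => -[] h0.
    by move: (congr1 (fun e : 'X_{1..2} => e ord0) h0); rewrite c0 mnmE => h1; move: hm; rewrite -h1.
  by move: (congr1 (fun e : 'X_{1..2} => e ord_max) h0); rewrite d1 mnmE => h1; move: hm; rewrite -h1.
pose f (e : 'X_{1..2}) := ((u0 + u1) *+ (e ord0) + mlead B *+ (e ord_max))%MM.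
have Fe : forall e : 'X_{1..2}, 'X_[e] \mPo [tuple A; B] = A ^+ e ord0 * B ^+ e ord_max.
  move=> e; rewrite comp_mpolyX big_ord_recl big_ord1 /=.
  have -> : lift ord0 ord0 = ord_max :> 'I_2 by apply: val_inj.
  done.
have finj : injective f.
  move=> e e' h.
  have h0 := congr1 (fun x : 'X_{1..2} => x ord0) h.
  have h1 := congr1 (fun x : 'X_{1..2} => x ord_max) h.
  rewrite /= /f !mnmDE !mulmnE !mnmDE !mnm1E /= in h0 h1.
  have [a0 a1] : e ord0 = e' ord0 /\ e ord_max = e' ord_max.
    by case: eL => hL; rewrite hL ?c0 ?d0 ?c1 ?d1 in h0 h1; nia.
  apply/mnmP => -[[|[|//]]] Hi.
    by have -> : Ordinal Hi = ord0 by apply: val_inj.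
  by have -> : Ordinal Hi = ord_max by apply: val_inj.
pose F (e : 'X_{1..2}) := P@_e *: (A ^+ e ord0 * B ^+ e ord_max).
have mlF : forall e, e \in msupp P -> mlead (F e) = f e.
  move=> e he; rewrite /F mleadZ; last by rewrite -mcoeff_msupp.
  by rewrite mleadM ?expf_neq0 // !mleadX // eA mleadXm.
have HP' : \sum_(e <- msupp P) F e = 0.
  by rewrite -[RHS]HP comp_mpolyEX; apply: eq_bigr => e _; rewrite Fe.
have hs := @mlead_sum _ _ _ (msupp P) predT F.
rewrite HP' mlead0 in hs.
case: (eqVneq P 0) => // P0.
have hmP := mlead_supp P0.
have U : uniq [seq mlead (F x) | x <- [seq x <- msupp P | predT x]].
  have -> : [seq mlead (F x) | x <- [seq x <- msupp P | predT x]] = [seq f x | x <- msupp P].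
    by rewrite filter_predT; apply/eq_in_map => x hx; exact: mlF.
  by rewrite map_inj_uniq // msupp_uniq.
have := joins_sup_seq (P := predT) (fun e => mlead (F e)) hmP isT.
rewrite -(hs U).
rewrite mlF // => hle.
have fz : f (mlead P) = 0%MM by apply: le_anti; rewrite hle le0m.
have f0 : f 0%MM = 0%MM by apply/mnmP => i; rewrite /f !mnmDE !mulmnE !mnm0E !muln0.
have mP0 : mlead P = 0%MM by apply: finj; rewrite fz f0.
have sz : (msize P <= 1)%N by rewrite -(mlead_deg P0) mP0 mdeg0.
have eP := msize1_polyC sz.
rewrite eP comp_mpolyC in HP.
move/eqP: HP; rewrite mpolyC_eq0 => /eqP c.
by move: P0; rewrite eP c eqxx.
Qed.

Theorem corollary2p5 (C : numClosedFieldType) (m : nat) (hm : (2 <= m)%N) :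
  (forall c : C, quasiharmonic m c (zv C ^+ m + zbv C ^+ m)) /\
  alg_indep (zv C * zbv C) (zv C ^+ m + zbv C ^+ m).
Proof.
have m0 : (0 < m)%N by apply: ltnW.
split; last exact: indep.
move=> c; rewrite /quasiharmonic /DunklF.
rewrite (Ybar_q hm (zeta_m C m0) (zeta_G C hm)).
by rewrite (Y_w (zeta_G C hm) (zeta_ne0 C m0)) oppr0.
Qed.
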